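(* Let $0=x_1<\dots<x_N=1$ be a partition of $I=[0,1]$, let $\{q_n\}$ be a sequence in $(0,1]$ with $\lim q_n=1$, and let $\alpha_i$, $i\in\mathbb{N}_{N-1}$, be bounded functions on $I$ with $\|\alpha_i\|_\infty<1$. If $S=\{f_s:s\in\mathbb{N}\}\subset C[0,1]$ is dense in $C[0,1]$ (sup-norm), then \[ \bigcup_{n=1}^\infty\operatorname{span}\{\mathcal{F}^{(q_n,\alpha)}_n(f_s):s\in\mathbb{N}\} \] is also dense in $C[0,1]$.
   Context: For $q\in(0,1]$: $[k]_q=\frac{1-q^k}{1-q}$ ($q\ne1$), $[k]_1=k$, $q$-factorials, $\binom{n}{k}_q=\frac{[n]_q!}{[k]_q![n-k]_q!}$. On $[0,1]$ the quantum MKZ operator is $M_{n,q}h(x)=\prod_{j=0}^n(1-q^jx)\sum_{k\ge0}\binom{n+k}{k}_q x^k h\!\left(\frac{[k]_q}{[k+n]_q}\right)$ for $0\le x<1$, $M_{n,q}h(1)=h(1)$. Let $u_i(x)=a_ix+b_i$ be the affine maps with $u_i(0)=x_i$, $u_i(1)=x_{i+1}$, $i\in\mathbb{N}_{N-1}$. For $h\in C[0,1]$, $\mathcal{F}^{(q,\alpha)}_n(h)$ denotes the unique bounded function $G:[0,1]\to\mathbb{R}$ with $G(u_i(x))=h(u_i(x))+\alpha_i(x)(G(x)-M_{n,q}h(x))$ for all $x\in I$, $i\in\mathbb{N}_{N-1}$. *)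

(* Defs.v *)
From Stdlib Require Import Reals Lra Lia ClassicalEpsilon.
From Coquelicot Require Import Coquelicot.
Open Scope R_scope.

Definition qint (q : R) (k : nat) : R :=
  if Req_EM_T q 1 then INR k else (1 - q ^ k) / (1 - q).

Fixpoint qfact (q : R) (n : nat) : R :=
  match n with
  | O => 1
  | S m => qfact q m * qint q (S m)
  end.

Definition qbinom (q : R) (n k : nat) : R :=
  qfact q n / (qfact q k * qfact q (n - k)).

Fixpoint qprod (q x : R) (n : nat) : R :=
  match n with
  | O => 1 - x
  | S m => qprod q x m * (1 - q ^ (S m) * x)
  end.

Definition MKZ (n : nat) (q : R) (h : R -> R) (x : R) : R :=
  if Rlt_dec x 1 then
    qprod q x n *
    Series (fun k => qbinom q (n + k) k * x ^ k * h (qint q k / qint q (k + n)))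
  else h 1.

Definition inI (t : R) : Prop := 0 <= t <= 1.

Definition uaff (xs : nat -> R) (i : nat) (t : R) : R :=
  xs i + (xs (S i) - xs i) * t.

Definition is_fractal (N : nat) (xs : nat -> R) (alpha : nat -> R -> R)
  (q : R) (n : nat) (h G : R -> R) : Prop :=
  (exists B, forall t, inI t -> Rabs (G t) <= B) /\
  (forall i t, (1 <= i <= N - 1)%nat -> inI t ->
     G (uaff xs i t) = h (uaff xs i t) + alpha i t * (G t - MKZ n q h t)).

(* F^{(q,alpha)}_n(h): the (unique) bounded function with the equation *)
Definition fractal (N : nat) (xs : nat -> R) (alpha : nat -> R -> R)
  (q : R) (n : nat) (h : R -> R) : R -> R :=
  epsilon (inhabits (fun _ : R => 0)) (is_fractal N xs alpha q n h).

(* continuity on I = [0,1] (relative topology), i.e. h in C[0,1] *)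
Definition cont_on_I (h : R -> R) : Prop :=
  forall t, inI t -> forall eps, 0 < eps -> exists delta, 0 < delta /\
    forall y, inI y -> Rabs (y - t) < delta -> Rabs (h y - h t) < eps.

(* Main.v *)
Require Import Defs.
From Stdlib Require Import Reals Lra Lia ClassicalEpsilon ZArith.
From Coquelicot Require Import Coquelicot.
Open Scope R_scope.


Fixpoint qe (q : R) (k : nat) : R :=
  match k with O => 0 | S m => qe q m + q ^ m end.

Lemma qint_qe q k : qint q k = qe q k.
Proof.
  unfold qint. destruct (Req_EM_T q 1) as [->|Hq].
  - induction k as [|k IH]; [reflexivity|]. simpl qe. rewrite <- IH, pow1.
    rewrite S_INR. ring.
  - induction k as [|k IH]; simpl.
    + field. intro H; apply Hq; lra.
    + rewrite <- IH. field. intro H; apply Hq; lra.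
Qed.

Lemma qe_nonneg q k : 0 < q -> 0 <= qe q k.
Proof.
  intro Hq; induction k; simpl; [lra|]. pose proof (pow_lt q k Hq); lra.
Qed.

Lemma qe_pos q k : 0 < q -> (1 <= k)%nat -> 0 < qe q k.
Proof.
  intros Hq Hk. destruct k; [lia|]. simpl.
  pose proof (qe_nonneg q k Hq); pose proof (pow_lt q k Hq); lra.
Qed.

Lemma qe_add q a b : qe q (a + b) = qe q a + q ^ a * qe q b.
Proof.
  induction b as [|b IH].
  - rewrite Nat.add_0_r; simpl; ring.
  - rewrite Nat.add_succ_r; simpl. rewrite IH, pow_add. ring.
Qed.

Lemma qe_mono q a b : 0 < q -> qe q a <= qe q (a + b).
Proof.
  intro Hq. rewrite qe_add. pose proof (pow_lt q a Hq).
  pose proof (qe_nonneg q b Hq). nra.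
Qed.

Lemma qfact_pos q k : 0 < q -> 0 < qfact q k.
Proof.
  intro Hq; induction k; simpl; [lra|]. rewrite qint_qe.
  apply Rmult_lt_0_compat; auto. apply qe_pos; auto; lia.
Qed.

Definition B q n k := qfact q (n + k) / (qfact q k * qfact q n).

Lemma qbinom_B q n k : qbinom q (n + k) k = B q n k.
Proof. unfold qbinom, B. now replace (n + k - k)%nat with n by lia. Qed.

Lemma B_pos q n k : 0 < q -> 0 < B q n k.
Proof.
  intro Hq; unfold B. pose proof (qfact_pos q (n+k) Hq).
  pose proof (qfact_pos q k Hq). pose proof (qfact_pos q n Hq).
  apply Rdiv_lt_0_compat; auto. apply Rmult_lt_0_compat; auto.
Qed.

Lemma B_0k q k : 0 < q -> B q 0 k = 1.
Proof.
  intro Hq; unfold B; simpl. pose proof (qfact_pos q k Hq). field. lra.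
Qed.

Lemma B_n0 q n : 0 < q -> B q n 0 = 1.
Proof.
  intro Hq; unfold B; simpl. rewrite Nat.add_0_r. pose proof (qfact_pos q n Hq). field. lra.
Qed.

Lemma qfact_S q m : qfact q (S m) = qfact q m * qe q (S m).
Proof. simpl qfact. now rewrite qint_qe. Qed.

Lemma B_rec q n k : 0 < q ->
  B q (S n) (S k) = q ^ (S n) * B q (S n) k + B q n (S k).
Proof.
  intro Hq. unfold B.
  replace (S n + S k)%nat with (S (S n + k)) by lia.
  replace (n + S k)%nat with (S n + k)%nat by lia.
  rewrite (qfact_S q (S n + k)), (qfact_S q k), (qfact_S q n).
  pose proof (qfact_pos q (S n + k) Hq). pose proof (qfact_pos q k Hq).
  pose proof (qfact_pos q n Hq).
  pose proof (qe_pos q (S k) Hq ltac:(lia)). pose proof (qe_pos q (S n) Hq ltac:(lia)).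
  replace (S (S n + k)) with (S n + S k)%nat by lia.
  rewrite (qe_add q (S n) (S k)).
  field. repeat split; lra.
Qed.

Lemma pow_le1 q k : 0 <= q <= 1 -> q ^ k <= 1.
Proof.
  intro H; induction k; simpl; [lra|].
  pose proof (pow_le q k (proj1 H)). nra.
Qed.

Definition tq q n k := qe q k / qe q (k + n).

Lemma tq_B q n k : 0 < q -> tq q n (S k) * B q n (S k) = B q n k.
Proof.
  intro Hq. unfold tq, B.
  replace (n + S k)%nat with (S (n + k)) by lia.
  replace (S k + n)%nat with (S (n + k)) by lia.
  rewrite (qfact_S q (n + k)), (qfact_S q k).
  pose proof (qfact_pos q (n + k) Hq). pose proof (qfact_pos q k Hq).
  pose proof (qfact_pos q n Hq).
  pose proof (qe_pos q (S k) Hq ltac:(lia)). pose proof (qe_pos q (S (n+k)) Hq ltac:(lia)).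
  field. repeat split; lra.
Qed.

Lemma tq_0 q n : tq q n 0 = 0.
Proof. unfold tq; simpl; unfold Rdiv; ring. Qed.

Lemma tq_range q n k : 0 < q -> 0 <= tq q n k <= 1.
Proof.
  intro Hq. unfold tq. destruct k.
  - simpl. unfold Rdiv; rewrite Rmult_0_l; lra.
  - pose proof (qe_pos q (S k) Hq ltac:(lia)). pose proof (qe_mono q (S k) n Hq).
    split. apply Rdiv_le_0_compat; lra.
    apply Rmult_le_reg_r with (qe q (S k + n)); [lra|].
    unfold Rdiv; rewrite Rmult_assoc, Rinv_l by lra. lra.
Qed.

Lemma tq_step q n k : 0 < q <= 1 -> (1 <= n)%nat ->
  tq q n (S k) <= tq q n k + / qe q n.
Proof.
  intros [Hq Hq1] Hn. unfold tq.
  pose proof (qe_pos q n Hq Hn) as Hen.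
  assert (E1 : qe q (S k + n) = qe q (k + n) + q ^ (k + n)) by reflexivity.
  assert (E2 : qe q (k + n) = qe q k + q ^ k * qe q n) by (rewrite (Nat.add_comm k n), <- qe_add; f_equal; lia).
  pose proof (qe_mono q n k Hq) as M1. rewrite Nat.add_comm in M1.
  pose proof (qe_mono q n (S k) Hq) as M2. rewrite Nat.add_comm in M2.
  assert (Hqk : 0 < q ^ k <= 1) by (split; [apply pow_lt; lra| apply pow_le1; lra]).
  assert (Hqkn : 0 < q ^ (k+n)) by (apply pow_lt; lra).
  simpl qe at 1.
  assert (D : (qe q k + q ^ k) / qe q (S k + n) - qe q k / qe q (k + n)
              = q ^ k * qe q n / (qe q (S k + n) * qe q (k + n))).
  { assert (E3 : qe q (k + n) = qe q n + q ^ n * qe q k) by (rewrite Nat.add_comm; apply qe_add).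
    rewrite E1. rewrite pow_add.
    replace ((qe q k + q ^ k) / (qe q (k + n) + q ^ k * q ^ n) - qe q k / qe q (k + n))
      with ((q ^ k * qe q (k + n) - qe q k * (q ^ k * q ^ n)) / ((qe q (k + n) + q ^ k * q ^ n) * qe q (k+n))).
    2:{ field. rewrite <- pow_add. split; lra. }
    rewrite <- pow_add, <- E1. f_equal. rewrite E3, pow_add. ring. }
  assert (q ^ k * qe q n / (qe q (S k + n) * qe q (k + n)) <= / qe q n).
  { apply Rmult_le_reg_r with (qe q (S k + n) * qe q (k + n)). nra.
    unfold Rdiv. rewrite Rmult_assoc, Rinv_l by nra. rewrite Rmult_1_r.
    apply Rmult_le_reg_l with (qe q n); auto.
    replace (qe q n * (/ qe q n * (qe q (S k + n) * qe q (k + n)))) with (qe q (S k + n) * qe q (k + n)) by (field; lra).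
    nra. }
  lra.
Qed.

Lemma qprod_pos q x n : 0 < q <= 1 -> 0 <= x < 1 -> 0 < qprod q x n.
Proof.
  intros Hq Hx; induction n; simpl; [lra|].
  assert (q * q ^ n <= 1) by (change (q ^ S n <= 1); apply pow_le1; lra).
  assert (0 <= q * q ^ n) by (change (0 <= q ^ S n); apply pow_le; lra).
  apply Rmult_lt_0_compat; auto. nra.
Qed.

Lemma sum_n_Rplus (a : nat -> R) K : sum_n a (S K) = sum_n a K + a (S K).
Proof. exact (@sum_Sn R_AbelianMonoid a K). Qed.

Lemma B_series q x n : 0 < q <= 1 -> 0 <= x < 1 ->
  is_series (fun k => B q n k * x ^ k) (/ qprod q x n).
Proof.
  intros Hq Hx. induction n as [|n IH].
  - simpl qprod. apply is_series_ext with (fun k => x ^ k).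
    + intro k. rewrite B_0k by lra. now rewrite Rmult_1_l.
    + apply is_series_geom. rewrite Rabs_right; lra.
  - set (r := q ^ S n * x).
    assert (Hr : 0 <= r < 1).
    { unfold r. assert (q ^ S n <= 1) by (apply pow_le1; lra).
      assert (0 <= q ^ S n) by (apply pow_le; lra). split; nra. }
    set (c := fun k => B q n k * x ^ k).
    set (a := fun k => B q (S n) k * x ^ k).
    assert (Hc0 : forall k, 0 <= c k).
    { intro k; unfold c. pose proof (B_pos q n k (proj1 Hq)). pose proof (pow_le x k (proj1 Hx)). nra. }
    assert (Ha0 : forall k, 0 <= a k).
    { intro k; unfold a. pose proof (B_pos q (S n) k (proj1 Hq)). pose proof (pow_le x k (proj1 Hx)). nra. }
    assert (Hrec : forall k, a (S k) = r * a k + c (S k)).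
    { intro k. unfold a, c, r. rewrite B_rec by lra. simpl pow. ring. }
    assert (Hps : forall K, sum_n a K * (1 - r) = sum_n c K - r * a K).
    { induction K as [|K IHK].
      - rewrite !sum_O. unfold a, c. rewrite !B_n0 by lra. simpl. ring.
      - rewrite !sum_n_Rplus. rewrite Hrec.
        replace ((sum_n a K + (r * a K + c (S K))) * (1 - r)) with
          (sum_n a K * (1 - r) + (r * a K + c (S K)) * (1 - r)) by ring.
        rewrite IHK. ring. }
    assert (Hcb : forall K, sum_n c K <= / qprod q x n).
    { apply is_lim_seq_incr_compare. exact IH. intro K. rewrite sum_n_Rplus.
      pose proof (Hc0 (S K)); lra. }
    assert (Hex : ex_series a).
    { destruct (growing_cv (sum_n a)) as [l Hl].
      - intro K. unfold Un_growing. rewrite sum_n_Rplus. pose proof (Ha0 (S K)); lra.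
      - exists (/ qprod q x n / (1 - r)). intros y [K ->].
        apply Rmult_le_reg_r with (1 - r); [lra|].
        unfold Rdiv; rewrite Rmult_assoc, Rinv_l by lra. rewrite Rmult_1_r, Hps.
        pose proof (Hcb K). pose proof (Ha0 K). nra.
      - exists l. apply is_lim_seq_Reals. exact Hl. }
    pose proof (ex_series_lim_0 a Hex) as Ha_lim.
    assert (HP : qprod q x (S n) = qprod q x n * (1 - r)) by reflexivity.
    pose proof (qprod_pos q x n Hq Hx).
    rewrite HP.
    change (is_lim_seq (sum_n a) (/ (qprod q x n * (1 - r)))).
    apply is_lim_seq_ext with (fun K => (sum_n c K - r * a K) / (1 - r)).
    + intro K. rewrite <- Hps. field. lra.
    + replace (/ (qprod q x n * (1 - r))) with ((/ qprod q x n - r * 0) * / (1 - r)) by (field; lra).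
      apply is_lim_seq_scal_r with (lu := Finite (/ qprod q x n - r * 0)).
      apply is_lim_seq_minus'. exact IH. apply is_lim_seq_scal_l with (lu := Finite 0). exact Ha_lim.
Qed.

Lemma sum_n_mono (a b : nat -> R) K : (forall k, a k <= b k) -> sum_n a K <= sum_n b K.
Proof.
  intro H; induction K; [rewrite !sum_O; auto|]. rewrite !sum_n_Rplus.
  pose proof (H (S K)); lra.
Qed.

Lemma series_le_is a b la lb : (forall k, a k <= b k) ->
  is_series a la -> is_series b lb -> la <= lb.
Proof.
  intros H Ha Hb. apply (is_lim_seq_le (sum_n a) (sum_n b) la lb); auto.
  intro; now apply sum_n_mono.
Qed.

Lemma series_bound a b lb : (forall k, Rabs (a k) <= b k) -> is_series b lb ->
  ex_series a /\ Rabs (Series a) <= lb.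
Proof.
  intros H Hb.
  assert (Hex : ex_series a).
  { apply (ex_series_le a b); [exact H| exists lb; exact Hb]. }
  split; auto. pose proof (Series_correct a Hex) as Ha.
  apply Rabs_le. split.
  - assert (Hn : is_series (fun k => - b k) (- lb)).
    { exact (is_series_opp b lb Hb). }
    apply (series_le_is (fun k => - b k) a); auto.
    intro k; pose proof (H k) as Hk. apply Rabs_le_between in Hk. lra.
  - apply (series_le_is a b); auto.
    intro k; pose proof (H k) as Hk. apply Rabs_le_between in Hk. lra.
Qed.

Lemma MKZ_eq n q h x : x < 1 ->
  MKZ n q h x = qprod q x n * Series (fun k => B q n k * x ^ k * h (tq q n k)).
Proof.
  intro Hx. unfold MKZ. destruct (Rlt_dec x 1); [|lra]. f_equal.
  apply Series_ext; intro k. rewrite qbinom_B, !qint_qe. reflexivity.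
Qed.

Lemma MKZ_1 n q h : MKZ n q h 1 = h 1.
Proof. unfold MKZ. destruct (Rlt_dec 1 1); [lra|reflexivity]. Qed.

Lemma MKZ_bound n q h Bh x : 0 < q <= 1 ->
  (forall t, inI t -> Rabs (h t) <= Bh) -> inI x -> Rabs (MKZ n q h x) <= Bh.
Proof.
  intros Hq Hh Hx. destruct (Rlt_dec x 1) as [Hx1|Hx1].
  2:{ replace x with 1 by (unfold inI in Hx; lra). rewrite MKZ_1. apply Hh. unfold inI; lra. }
  rewrite MKZ_eq by auto.
  assert (Hx' : 0 <= x < 1) by (unfold inI in Hx; lra).
  pose proof (qprod_pos q x n Hq Hx') as HP.
  pose proof (B_series q x n Hq Hx') as HS.
  assert (HSb : is_series (fun k => Bh * (B q n k * x ^ k)) (Bh * / qprod q x n)).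
  { apply (is_series_scal_l Bh) in HS. exact HS. }
  assert (Hab : forall k, Rabs (B q n k * x ^ k * h (tq q n k)) <= Bh * (B q n k * x ^ k)).
  { intro k. pose proof (B_pos q n k (proj1 Hq)). pose proof (pow_le x k (proj1 Hx')).
    rewrite Rabs_mult, (Rabs_right (B q n k * x ^ k)) by (apply Rle_ge; apply Rmult_le_pos; lra).
    pose proof (Hh (tq q n k) (tq_range q n k (proj1 Hq))).
    rewrite (Rmult_comm Bh). apply Rmult_le_compat_l; auto. apply Rmult_le_pos; lra. }
  destruct (series_bound _ _ _ Hab HSb) as [_ Hb].
  rewrite Rabs_mult, Rabs_right by lra.
    apply Rmult_le_compat_l with (r := qprod q x n) in Hb; [|lra].
    replace (qprod q x n * (Bh * / qprod q x n)) with Bh in Hb by (field; lra). exact Hb.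
Qed.

Ltac Rring := match goal with |- ?a = ?b => change (@eq R a b); ring end.

Lemma sum_n_shift (a : nat -> R) K : @eq R (sum_n a (S K)) (a O + sum_n (fun j => a (S j)) K).
Proof.
  induction K. rewrite sum_n_Rplus, !sum_O. reflexivity.
  rewrite sum_n_Rplus, IHK, (sum_n_Rplus (fun j => a (S j))). ring.
Qed.

Lemma is_series_shift0 (a : nat -> R) l : a O = 0 ->
  is_series (fun j => a (S j)) l -> is_series a l.
Proof.
  intros H0 H. change (is_lim_seq (sum_n a) l). apply is_lim_seq_incr_1.
  apply is_lim_seq_ext with (sum_n (fun j => a (S j))).
  - intro K. change (@eq R (sum_n (fun j => a (S j)) K) (sum_n a (S K))).
    rewrite sum_n_shift, H0, Rplus_0_l. reflexivity.
  - exact H.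
Qed.

Lemma is_series_lin2 (u v : nat -> R) lu lv (c1 c2 : R) :
  is_series u lu -> is_series v lv ->
  is_series (fun k => c1 * u k + c2 * v k) (c1 * lu + c2 * lv).
Proof.
  intros Hu Hv. apply (is_series_scal_l c1) in Hu. apply (is_series_scal_l c2) in Hv.
  exact (is_series_plus _ _ _ _ Hu Hv).
Qed.

Lemma moment1 q n x : 0 < q <= 1 -> 0 <= x < 1 ->
  is_series (fun k => B q n k * x ^ k * tq q n k) (x * / qprod q x n).
Proof.
  intros Hq Hx. apply is_series_shift0.
  - rewrite tq_0; ring.
  - apply is_series_ext with (fun k => x * (B q n k * x ^ k)).
    + intro k. rewrite <- (tq_B q n k (proj1 Hq)). simpl pow. Rring.
    + pose proof (is_series_scal_l x _ _ (B_series q x n Hq Hx)) as H. exact H.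
Qed.

Lemma MKZ_approx n q h eps K x : 0 < q <= 1 -> (1 <= n)%nat -> 0 <= eps -> 0 <= K ->
  (forall s y, inI s -> inI y -> Rabs (h s - h y) <= eps + K * (s - y) ^ 2) ->
  inI x -> Rabs (MKZ n q h x - h x) <= eps + K / qe q n.
Proof.
  intros Hq Hn He HK Hh Hx.
  pose proof (qe_pos q n (proj1 Hq) Hn) as Hen.
  assert (HKe : 0 <= K / qe q n) by (apply Rdiv_le_0_compat; lra).
  destruct (Rlt_dec x 1) as [Hx1|Hx1].
  2:{ replace x with 1 by (unfold inI in Hx; lra). rewrite MKZ_1.
      unfold Rminus; rewrite Rplus_opp_r, Rabs_R0. lra. }
  rewrite MKZ_eq by auto.
  assert (Hx' : 0 <= x < 1) by (unfold inI in Hx; lra).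
  pose proof (qprod_pos q x n Hq Hx') as HP.
  set (P := qprod q x n) in *.
  set (e := qe q n) in *.
  set (w := fun k => B q n k * x ^ k).
  set (t := fun k => tq q n k).
  assert (Hw0 : forall k, 0 <= w k).
  { intro k; unfold w. pose proof (B_pos q n k (proj1 Hq)). pose proof (pow_le x k (proj1 Hx')).
    apply Rmult_le_pos; lra. }
  assert (Ht : forall k, inI (t k)) by (intro k; apply tq_range; lra).
  pose proof (B_series q x n Hq Hx') as HS. fold P in HS.
  pose proof (moment1 q n x Hq Hx') as HM1. fold P in HM1.
  set (c := fun k => match k with O => 0 | S j => x * (w j * t j) + (x / e) * w j end).
  assert (Hc : is_series c (x * (x * / P) + (x / e) * / P)).
  { apply is_series_shift0; [reflexivity|]. simpl.
    exact (is_series_lin2 (fun j => w j * t j) w _ _ x (x / e) HM1 HS). }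
  set (b := fun k => (eps + K * x ^ 2) * w k + (-2 * K * x) * (w k * t k) + K * c k).
  set (lb := (eps + K * x ^ 2) * / P + (-2 * K * x) * (x * / P) + K * (x * (x * / P) + (x / e) * / P)).
  assert (Hb : is_series b lb).
  { pose proof (is_series_lin2 w (fun k => w k * t k) _ _ (eps + K * x ^ 2) (-2 * K * x) HS HM1) as H1.
    pose proof (is_series_plus _ _ _ _ H1 (is_series_scal_l K _ _ Hc)) as H2.
    exact H2. }
  set (d := fun k => w k * (h (t k) - h x)).
  assert (Hdb : forall k, Rabs (d k) <= b k).
  { intro k. unfold d, b.
    assert (Hc' : w k * t k ^ 2 <= c k).
    { destruct k as [|j].
      - unfold t; rewrite tq_0. simpl. lra.
      - unfold c. 
        assert (E : w (S j) * t (S j) = x * w j).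
        { unfold w, t. rewrite <- (tq_B q n j (proj1 Hq)). simpl pow. ring. }
        assert (St : t (S j) <= t j + / e) by (apply tq_step; auto).
        replace (w (S j) * t (S j) ^ 2) with (x * w j * t (S j)) by (rewrite <- E; ring).
        pose proof (Hw0 j). assert (0 <= x * w j) by (apply Rmult_le_pos; lra).
        apply Rmult_le_compat_l with (r := x * w j) in St; auto.
        unfold Rdiv. lra. }
    rewrite Rabs_mult, (Rabs_right (w k)) by (apply Rle_ge; auto).
    pose proof (Hh (t k) x (Ht k) Hx) as Hk.
    apply Rmult_le_compat_l with (r := w k) in Hk; auto.
    assert (w k * (eps + K * (t k - x) ^ 2) =
            (eps + K * x ^ 2) * w k + -2 * K * x * (w k * t k) + K * (w k * t k ^ 2)) by ring.
    assert (K * (w k * t k ^ 2) <= K * c k) by (apply Rmult_le_compat_l; auto).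
    lra. }
  destruct (series_bound d b lb Hdb Hb) as [Hdex Hdle].
  assert (Hsum : Series (fun k => B q n k * x ^ k * h (t k)) = Series d + h x * / P).
  { apply is_series_unique.
    pose proof (is_series_plus _ _ _ _ (Series_correct d Hdex) (is_series_scal_l (h x) _ _ HS)) as H.
    apply is_series_ext with (2 := H). intro k. unfold d, w, t. unfold plus, scal; simpl. unfold mult; simpl. Rring. }
  rewrite Hsum.
  replace (P * (Series d + h x * / P) - h x) with (P * Series d) by (field; lra).
  rewrite Rabs_mult, (Rabs_right P) by lra.
  apply Rmult_le_compat_l with (r := P) in Hdle; [|lra].
  assert (P * lb = eps + K * x / e) by (unfold lb; field; lra).
  assert (K * x / e <= K / e).
  { unfold Rdiv. rewrite Rmult_assoc. rewrite <- (Rmult_1_l (/ e)) at 2.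
    apply Rmult_le_compat_l; auto. apply Rmult_le_compat_r; [left; apply Rinv_0_lt_compat; lra| lra]. }
  lra.
Qed.

Lemma qprod_0 q n : qprod q 0 n = 1.
Proof. induction n; simpl; [ring|]. rewrite IHn; ring. Qed.

Lemma MKZ_0 n q h : 0 < q <= 1 -> (1 <= n)%nat -> MKZ n q h 0 = h 0.
Proof.
  intros Hq Hn. rewrite MKZ_eq by lra. rewrite qprod_0, Rmult_1_l.
  apply is_series_unique. change (is_lim_seq (sum_n (fun k => B q n k * 0 ^ k * h (tq q n k))) (h 0)).
  apply is_lim_seq_ext with (fun _ => h 0); [|apply is_lim_seq_const].
  intro K. induction K.
  - rewrite sum_O. rewrite B_n0, tq_0 by lra. simpl. ring.
  - rewrite sum_n_Rplus, <- IHK. simpl. ring.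
Qed.

Definition part_ok (N : nat) (xs : nat -> R) : Prop :=
  (2 <= N)%nat /\ xs 1%nat = 0 /\ xs N = 1 /\
  (forall i, (1 <= i < N)%nat -> xs i < xs (S i)).

Lemma xs_lt N xs i j : part_ok N xs -> (1 <= i)%nat -> (i < j)%nat -> (j <= N)%nat ->
  xs i < xs j.
Proof.
  intros [_ [_ [_ H]]] Hi Hij HjN. induction j as [|j IH]; [lia|].
  destruct (Nat.eq_dec i j) as [->|Hne].
  - apply H; lia.
  - assert (xs i < xs j) by (apply IH; lia). assert (xs j < xs (S j)) by (apply H; lia). lra.
Qed.

Lemma xs_le N xs i j : part_ok N xs -> (1 <= i)%nat -> (i <= j)%nat -> (j <= N)%nat ->
  xs i <= xs j.
Proof.
  intros HP Hi Hij HjN. destruct (Nat.eq_dec i j) as [->|]; [lra|].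
  left; apply (xs_lt N); auto; lia.
Qed.

Lemma uaff_range N xs i t : part_ok N xs -> (1 <= i <= N - 1)%nat -> inI t ->
  xs i <= uaff xs i t <= xs (S i).
Proof.
  intros HP Hi Ht. unfold uaff, inI in *.
  assert (xs i < xs (S i)) by (destruct HP as [_ [_ [_ H]]]; apply H; lia).
  split; nra.
Qed.

Lemma rep_exists N xs y : part_ok N xs -> inI y ->
  exists i t, (1 <= i <= N - 1)%nat /\ inI t /\ uaff xs i t = y.
Proof.
  intros HP Hy.
  assert (G : forall k, (1 <= k)%nat -> (S k <= N)%nat -> y <= xs (S k) ->
            exists i, (1 <= i <= k)%nat /\ xs i <= y <= xs (S i)).
  { intros k. induction k as [|k IH]; intros Hk HkN Hyk; [lia|].
    destruct (Nat.eq_dec k 0) as [->|Hk0].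
    - exists 1%nat. split; [lia|]. destruct HP as [_ [H1 _]]. unfold inI in Hy. lra.
    - destruct (Rle_dec y (xs (S k))) as [Hle|Hgt].
      + destruct (IH ltac:(lia) ltac:(lia) Hle) as [i [Hi Hi2]]. exists i. split; [lia|auto].
      + exists (S k). split; [lia|]. lra. }
  pose proof HP as HP0. destruct HP0 as [HN [H1 [HNx Hinc]]].
  destruct (G (N - 1)%nat ltac:(lia) ltac:(lia)) as [i [Hi Hyi]].
  { replace (S (N - 1)) with N by lia. unfold inI in Hy. lra. }
  assert (Hd : xs i < xs (S i)) by (apply Hinc; lia).
  exists i, ((y - xs i) / (xs (S i) - xs i)). split; [lia|]. split.
  - unfold inI. split.
    + apply Rdiv_le_0_compat; lra.
    + apply Rmult_le_reg_r with (xs (S i) - xs i); [lra|].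
      unfold Rdiv; rewrite Rmult_assoc, Rinv_l by lra. lra.
  - unfold uaff. field. lra.
Qed.

Lemma rep_unique N xs i t j s : part_ok N xs ->
  (1 <= i <= N - 1)%nat -> inI t -> (1 <= j <= N - 1)%nat -> inI s ->
  uaff xs i t = uaff xs j s ->
  (i = j /\ t = s) \/ (j = S i /\ t = 1 /\ s = 0) \/ (i = S j /\ s = 1 /\ t = 0).
Proof.
  intros HP Hi Ht Hj Hs E.
  pose proof (uaff_range N xs i t HP Hi Ht) as Ri.
  pose proof (uaff_range N xs j s HP Hj Hs) as Rj.
  assert (Di : xs i < xs (S i)) by (destruct HP as [_ [_ [_ H]]]; apply H; lia).
  assert (Dj : xs j < xs (S j)) by (destruct HP as [_ [_ [_ H]]]; apply H; lia).
  destruct (Compare_dec.lt_eq_lt_dec i j) as [[Hlt| ->]|Hgt].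
  - right; left.
    assert (xs (S i) <= xs j) by (apply (xs_le N); auto; lia).
    assert (Eq1 : xs (S i) = xs j) by lra.
    assert (j = S i).
    { destruct (Nat.eq_dec j (S i)); auto.
      assert (xs (S i) < xs j) by (apply (xs_lt N); auto; lia). lra. }
    split; auto. unfold uaff in *. split.
    + assert (Hm : (xs (S i) - xs i) * t = (xs (S i) - xs i) * 1) by lra.
      apply Rmult_eq_reg_l in Hm; lra.
    + subst j. assert (Hm : (xs (S (S i)) - xs (S i)) * s = (xs (S (S i)) - xs (S i)) * 0) by lra.
      apply Rmult_eq_reg_l in Hm; lra.
  - left. split; auto. unfold uaff in E.
    assert (Hm : (xs (S j) - xs j) * t = (xs (S j) - xs j) * s) by lra.
    apply Rmult_eq_reg_l in Hm; lra.
  - right; right.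
    assert (xs (S j) <= xs i) by (apply (xs_le N); auto; lia).
    assert (i = S j).
    { destruct (Nat.eq_dec i (S j)); auto.
      assert (xs (S j) < xs i) by (apply (xs_lt N); auto; lia). lra. }
    split; auto. unfold uaff in *. subst i. split.
    + assert (Hm : (xs (S j) - xs j) * s = (xs (S j) - xs j) * 1) by lra.
      apply Rmult_eq_reg_l in Hm; lra.
    + assert (Hm : (xs (S (S j)) - xs (S j)) * t = (xs (S (S j)) - xs (S j)) * 0) by lra.
      apply Rmult_eq_reg_l in Hm; lra.
Qed.

Fixpoint iter_op (T : (R -> R) -> (R -> R)) (g0 : R -> R) (k : nat) : R -> R :=
  match k with O => g0 | S k => T (iter_op T g0 k) end.

Lemma telescope (G : nat -> R) K :
  @eq R (sum_n (fun k => G (S k) - G k) K) (G (S K) - G O).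
Proof.
  induction K. rewrite sum_O. reflexivity.
  rewrite sum_n_Rplus, IHK. ring.
Qed.

Lemma uaff_in N xs i t : part_ok N xs -> (1 <= i <= N - 1)%nat -> inI t -> inI (uaff xs i t).
Proof.
  intros HP Hi Ht. pose proof (uaff_range N xs i t HP Hi Ht).
  assert (xs 1%nat <= xs i) by (apply (xs_le N); auto; lia).
  assert (xs (S i) <= xs N) by (apply (xs_le N); auto; lia).
  destruct HP as [_ [Hx1 [HxN _]]]. unfold inI. lra.
Qed.

Lemma fractal_exists N xs alpha h M c Bh :
  part_ok N xs -> 0 <= c < 1 ->
  (forall i t, (1 <= i <= N - 1)%nat -> inI t -> Rabs (alpha i t) <= c) ->
  (forall t, inI t -> Rabs (h t) <= Bh) -> (forall t, inI t -> Rabs (M t) <= Bh) ->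
  M 0 = h 0 -> M 1 = h 1 ->
  exists G, (exists B, forall t, inI t -> Rabs (G t) <= B) /\
    (forall i t, (1 <= i <= N - 1)%nat -> inI t ->
       G (uaff xs i t) = h (uaff xs i t) + alpha i t * (G t - M t)).
Proof.
  intros HP Hc Ha Hh HM HM0 HM1.
  assert (HBh : 0 <= Bh) by (pose proof (Hh 0 ltac:(unfold inI; lra)); pose proof (Rabs_pos (h 0)); lra).
  set (Prep := fun y (p : nat * R) => (1 <= fst p <= N - 1)%nat /\ inI (snd p) /\ uaff xs (fst p) (snd p) = y).
  set (Rp := fun y => epsilon (inhabits (0%nat, 0)) (Prep y)).
  assert (HR : forall y, inI y -> Prep y (Rp y)).
  { intros y Hy. unfold Rp. apply epsilon_spec.
    destruct (rep_exists N xs y HP Hy) as [i [t H]]. exists (i, t). exact H. }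
  set (T := fun (g : R -> R) y => h y + alpha (fst (Rp y)) (snd (Rp y)) * (g (snd (Rp y)) - M (snd (Rp y)))).
  set (Gs := iter_op T h).
  assert (Hd : forall k y, inI y -> Rabs (Gs (S k) y - Gs k y) <= 2 * Bh * c ^ k).
  { induction k as [|k IH]; intros y Hy; destruct (HR y Hy) as [Hi [Ht _]].
    - change (Rabs (T h y - h y) <= 2 * Bh * c ^ 0). unfold T.
      replace (h y + alpha (fst (Rp y)) (snd (Rp y)) * (h (snd (Rp y)) - M (snd (Rp y))) - h y)
        with (alpha (fst (Rp y)) (snd (Rp y)) * (h (snd (Rp y)) - M (snd (Rp y)))) by ring.
      rewrite Rabs_mult. pose proof (Ha _ _ Hi Ht).
      pose proof (Rabs_triang (h (snd (Rp y))) (- M (snd (Rp y)))). rewrite Rabs_Ropp in H0.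
      pose proof (Hh _ Ht). pose proof (HM _ Ht).
      pose proof (Rabs_pos (alpha (fst (Rp y)) (snd (Rp y)))).
      pose proof (Rabs_pos (h (snd (Rp y)) - M (snd (Rp y)))).
      unfold Rminus at 1. nra.
    - change (Rabs (T (Gs (S k)) y - T (Gs k) y) <= 2 * Bh * c ^ S k). unfold T.
      replace (h y + alpha (fst (Rp y)) (snd (Rp y)) * (Gs (S k) (snd (Rp y)) - M (snd (Rp y))) -
               (h y + alpha (fst (Rp y)) (snd (Rp y)) * (Gs k (snd (Rp y)) - M (snd (Rp y)))))
        with (alpha (fst (Rp y)) (snd (Rp y)) * (Gs (S k) (snd (Rp y)) - Gs k (snd (Rp y)))) by ring.
      rewrite Rabs_mult. pose proof (Ha _ _ Hi Ht). pose proof (IH _ Ht).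
      pose proof (Rabs_pos (alpha (fst (Rp y)) (snd (Rp y)))).
      pose proof (Rabs_pos (Gs (S k) (snd (Rp y)) - Gs k (snd (Rp y)))).
      simpl pow. nra. }
  assert (Hgeo : is_series (fun k => 2 * Bh * c ^ k) (2 * Bh * / (1 - c))).
  { pose proof (is_series_scal_l (2 * Bh) _ _ (is_series_geom c ltac:(rewrite Rabs_right; lra))) as H.
    exact H. }
  set (G := fun y => h y + Series (fun k => Gs (S k) y - Gs k y)).
  assert (Hconv : forall y, inI y -> is_lim_seq (fun K => Gs (S K) y) (G y)).
  { intros y Hy. destruct (series_bound (fun k => Gs (S k) y - Gs k y) _ _ (fun k => Hd k y Hy) Hgeo) as [Hex _].
    pose proof (Series_correct _ Hex) as Hs.
    apply is_lim_seq_ext with (fun K => h y + sum_n (fun k => Gs (S k) y - Gs k y) K).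
    - intro K. rewrite (telescope (fun k => Gs k y)). change (Gs O y) with (h y). ring.
    - apply is_lim_seq_plus'. apply is_lim_seq_const. exact Hs. }
  assert (Hbnd : forall y, inI y -> Rabs (G y - h y) <= 2 * Bh * / (1 - c)).
  { intros y Hy. destruct (series_bound (fun k => Gs (S k) y - Gs k y) _ _ (fun k => Hd k y Hy) Hgeo) as [_ Hb].
    unfold G. replace (h y + Series (fun k => Gs (S k) y - Gs k y) - h y) with (Series (fun k => Gs (S k) y - Gs k y)) by ring.
    exact Hb. }
  assert (Hfix : forall y, inI y -> G y = T G y).
  { intros y Hy. destruct (HR y Hy) as [Hi [Ht _]].
    assert (L1 : is_lim_seq (fun K => Gs (S (S K)) y) (G y)).
    { apply (is_lim_seq_incr_1 (fun K => Gs (S K) y)). exact (Hconv y Hy). }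
    assert (L2 : is_lim_seq (fun K => Gs (S (S K)) y) (T G y)).
    { apply is_lim_seq_ext with (fun K => h y + alpha (fst (Rp y)) (snd (Rp y)) * (Gs (S K) (snd (Rp y)) - M (snd (Rp y)))).
      - intro K. reflexivity.
      - unfold T. apply is_lim_seq_plus'. apply is_lim_seq_const.
        apply is_lim_seq_scal_l with (lu := Finite (G (snd (Rp y)) - M (snd (Rp y)))).
        apply is_lim_seq_minus'. exact (Hconv _ Ht). apply is_lim_seq_const. }
    apply is_lim_seq_unique in L1. apply is_lim_seq_unique in L2.
    rewrite L1 in L2. injection L2. auto. }
  assert (Hu10 : uaff xs 1 0 = 0) by (destruct HP as [_ [H1 _]]; unfold uaff; rewrite H1; ring).
  assert (HuN1 : uaff xs (N - 1) 1 = 1).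
  { destruct HP as [HN [_ [HxN _]]]. unfold uaff. replace (S (N - 1)) with N by lia. rewrite HxN. ring. }
  assert (HI0 : inI 0) by (unfold inI; lra). assert (HI1 : inI 1) by (unfold inI; lra).
  assert (HN2 : (2 <= N)%nat) by (destruct HP; auto).
  assert (HG0 : G 0 = h 0).
  { destruct (HR 0 HI0) as [Hi [Ht Hu]].
    destruct (rep_unique N xs _ _ 1%nat 0 HP Hi Ht ltac:(lia) HI0 ltac:(rewrite Hu; auto))
      as [[_ E]|[[E1 [E2 E3]]|[E1 [E2 E3]]]]; try lia; try lra.
    pose proof (Hfix 0 HI0) as F. unfold T in F. rewrite E, HM0 in F.
    pose proof (Ha _ _ Hi Ht) as Hal. rewrite E in Hal.
    set (a := alpha (fst (Rp 0)) 0) in *.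
    assert ((1 - a) * (G 0 - h 0) = 0) by (replace ((1 - a) * (G 0 - h 0)) with (G 0 - (h 0 + a * (G 0 - h 0))) by ring; rewrite <- F; ring).
    apply Rmult_integral in H as [H|H]; [|lra].
    apply Rabs_le_between in Hal. lra. }
  assert (HG1 : G 1 = h 1).
  { destruct (HR 1 HI1) as [Hi [Ht Hu]].
    destruct (rep_unique N xs _ _ (N - 1)%nat 1 HP Hi Ht ltac:(lia) HI1 ltac:(rewrite Hu; auto))
      as [[_ E]|[[E1 [E2 E3]]|[E1 [E2 E3]]]]; try lia; try lra.
    pose proof (Hfix 1 HI1) as F. unfold T in F. rewrite E, HM1 in F.
    pose proof (Ha _ _ Hi Ht) as Hal. rewrite E in Hal.
    set (a := alpha (fst (Rp 1)) 1) in *.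
    assert ((1 - a) * (G 1 - h 1) = 0) by (replace ((1 - a) * (G 1 - h 1)) with (G 1 - (h 1 + a * (G 1 - h 1))) by ring; rewrite <- F; ring).
    apply Rmult_integral in H as [H|H]; [|lra].
    apply Rabs_le_between in Hal. lra. }
  exists G. split.
  - exists (Bh + 2 * Bh * / (1 - c)). intros t Ht. pose proof (Hbnd t Ht). pose proof (Hh t Ht).
    pose proof (Rabs_triang (G t - h t) (h t)). replace (G t - h t + h t) with (G t) in H1 by ring. lra.
  - intros i t Hi Ht.
    set (y := uaff xs i t).
    assert (Hy : inI y) by (apply (uaff_in N); auto).
    rewrite (Hfix y Hy). unfold T.
    destruct (HR y Hy) as [Hi' [Ht' Hu']].
    destruct (rep_unique N xs _ _ i t HP Hi' Ht' Hi Ht ltac:(rewrite Hu'; auto))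
      as [[E1 E2]|[[E1 [E2 E3]]|[E1 [E2 E3]]]].
    + rewrite E1, E2. reflexivity.
    + rewrite E2, E3, HG1, HM1, HG0, HM0. ring.
    + rewrite E2, E3, HG1, HM1, HG0, HM0. ring.
Qed.

Lemma nat_large (L : R) : exists m : nat, L <= INR m.
Proof.
  destruct (archimed L) as [H1 H2].
  destruct (Rle_or_lt L 0) as [HL|HL].
  - exists 0%nat. simpl. lra.
  - assert (Hz : (0 <= up L)%Z).
    { apply le_IZR. lra. }
    exists (Z.to_nat (up L)). rewrite INR_IZR_INZ, Z2Nat.id by lia. lra.
Qed.

Lemma alpha_unif (alpha : nat -> R -> R) M :
  (forall i, (1 <= i <= M)%nat -> exists c, c < 1 /\ forall t, inI t -> Rabs (alpha i t) <= c) ->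
  exists c, 0 <= c < 1 /\ forall i t, (1 <= i <= M)%nat -> inI t -> Rabs (alpha i t) <= c.
Proof.
  induction M as [|M IH]; intro H.
  - exists 0. split; [lra|]. intros; lia.
  - destruct IH as [c1 [Hc1 H1]].
    { intros i Hi. apply H. lia. }
    destruct (H (S M) ltac:(lia)) as [c2 [Hc2 H2]].
    exists (Rmax c1 c2). split.
    + split. pose proof (Rmax_l c1 c2); lra. apply Rmax_lub_lt; lra.
    + intros i t Hi Ht. destruct (Nat.eq_dec i (S M)) as [->|Hne].
      * pose proof (H2 t Ht). pose proof (Rmax_r c1 c2). lra.
      * pose proof (H1 i t ltac:(lia) Ht). pose proof (Rmax_l c1 c2). lra.
Qed.

Lemma fractal_bound N xs alpha q n h G c Bh eta :
  part_ok N xs -> 0 <= c < 1 ->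
  (forall i t, (1 <= i <= N - 1)%nat -> inI t -> Rabs (alpha i t) <= c) ->
  (forall t, inI t -> Rabs (h t) <= Bh) ->
  (forall t, inI t -> Rabs (h t - MKZ n q h t) <= eta) ->
  is_fractal N xs alpha q n h G ->
  forall eps', 0 < eps' -> forall y, inI y -> Rabs (G y - h y) <= eta * c / (1 - c) + eps'.
Proof.
  intros HP Hc Ha Hh HM [[BG HBG] HG] eps' He.
  assert (Heta : 0 <= eta) by (pose proof (HM 0 ltac:(unfold inI; lra)); pose proof (Rabs_pos (h 0 - MKZ n q h 0)); lra).
  set (D0 := BG + Bh).
  assert (HD0 : forall y, inI y -> Rabs (G y - h y) <= D0).
  { intros y Hy. pose proof (HBG y Hy). pose proof (Hh y Hy).
    pose proof (Rabs_triang (G y) (- h y)). rewrite Rabs_Ropp in H1. unfold D0, Rminus. lra. }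
  assert (HD0p : 0 <= D0) by (pose proof (HD0 0 ltac:(unfold inI; lra)); pose proof (Rabs_pos (G 0 - h 0)); lra).
  assert (Hk : forall k y, inI y -> Rabs (G y - h y) <= c ^ k * D0 + eta * c / (1 - c)).
  { induction k as [|k IH]; intros y Hy.
    - simpl. pose proof (HD0 y Hy). assert (0 <= eta * c / (1 - c)).
      { apply Rdiv_le_0_compat; [apply Rmult_le_pos|]; lra. } lra.
    - destruct (rep_exists N xs y HP Hy) as [i [t [Hi [Ht Hu]]]].
      rewrite <- Hu, HG by auto.
      replace (h (uaff xs i t) + alpha i t * (G t - MKZ n q h t) - h (uaff xs i t))
        with (alpha i t * (G t - MKZ n q h t)) by ring.
      rewrite Rabs_mult.
      assert (X : Rabs (G t - MKZ n q h t) <= c ^ k * D0 + eta * c / (1 - c) + eta).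
      { pose proof (IH t Ht). pose proof (HM t Ht).
        pose proof (Rabs_triang (G t - h t) (h t - MKZ n q h t)).
        replace (G t - h t + (h t - MKZ n q h t)) with (G t - MKZ n q h t) in H1 by ring. lra. }
      pose proof (Ha i t Hi Ht).
      pose proof (Rabs_pos (alpha i t)). pose proof (Rabs_pos (G t - MKZ n q h t)).
      assert (Rabs (alpha i t) * Rabs (G t - MKZ n q h t) <= c * (c ^ k * D0 + eta * c / (1 - c) + eta)).
      { apply Rmult_le_compat; auto. }
      replace (c ^ S k * D0 + eta * c / (1 - c)) with (c * (c ^ k * D0 + eta * c / (1 - c) + eta))
        by (simpl; field; lra). exact H2. }
  destruct (Req_dec D0 0) as [HZ|HNZ].
  - intros y Hy. pose proof (Hk 0%nat y Hy). rewrite HZ in H. simpl in H. lra.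
  - destruct (pow_lt_1_zero c ltac:(rewrite Rabs_right; lra) (eps' / D0) ltac:(apply Rdiv_lt_0_compat; lra)) as [K HK].
    intros y Hy. pose proof (Hk K y Hy). pose proof (HK K (le_n K)).
    rewrite Rabs_right in H0 by (apply Rle_ge, pow_le; lra).
    assert (c ^ K * D0 < eps').
    { apply Rmult_lt_compat_r with (r := D0) in H0; [|lra].
      unfold Rdiv in H0. rewrite Rmult_assoc, Rinv_l in H0 by lra. lra. }
    lra.
Qed.

Definition ext01 (h : R -> R) (x : R) := h (Rmax 0 (Rmin 1 x)).

Lemma clamp_in x : inI (Rmax 0 (Rmin 1 x)).
Proof.
  unfold inI. split. apply Rmax_l. apply Rmax_lub; [lra|apply Rmin_l].
Qed.

Lemma clamp_id x : inI x -> Rmax 0 (Rmin 1 x) = x.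
Proof.
  unfold inI; intro H. rewrite Rmin_right by lra. rewrite Rmax_right by lra. reflexivity.
Qed.

Lemma clamp_lip x y : Rabs (Rmax 0 (Rmin 1 x) - Rmax 0 (Rmin 1 y)) <= Rabs (x - y).
Proof.
  unfold Rmax, Rmin. repeat destruct Rle_dec; apply Rabs_le; split;
  try (apply Rabs_le_between; apply Rle_refl); 
  pose proof (Rle_abs (x - y)); pose proof (Rle_abs (-(x - y))); rewrite Rabs_Ropp in *; lra.
Qed.

Lemma ext01_cont h : cont_on_I h -> forall x, continuity_pt (ext01 h) x.
Proof.
  intros Hh x. unfold continuity_pt, continue_in, limit1_in, limit_in. simpl.
  intros eps Heps.
  destruct (Hh _ (clamp_in x) eps Heps) as [d [Hd Hd2]].
  exists d. split; [lra|]. intros y [_ Hy]. unfold Rdist in *. unfold ext01.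
  apply Hd2. apply clamp_in. pose proof (clamp_lip y x). lra.
Qed.

Lemma cont_props h : cont_on_I h ->
  (exists Bh, forall t, inI t -> Rabs (h t) <= Bh) /\
  (forall rho, 0 < rho -> exists d, 0 < d /\ forall s y, inI s -> inI y -> Rabs (s - y) < d -> Rabs (h s - h y) < rho).
Proof.
  intro Hh. pose proof (ext01_cont h Hh) as Hc. split.
  - destruct (continuity_ab_maj (fun x => Rabs (ext01 h x)) 0 1 ltac:(lra)) as [Mx [HM _]].
    + intros x _. apply (continuity_pt_comp (ext01 h) Rabs). apply Hc. apply Rcontinuity_abs.
    + exists (Rabs (ext01 h Mx)). intros t Ht. pose proof (HM t Ht). unfold ext01 in H at 1.
      rewrite clamp_id in H by auto. exact H.
  - intros rho Hrho.
    destruct (Heine (ext01 h) (fun c => 0 <= c <= 1) (compact_P3 0 1) (fun x _ => Hc x) (mkposreal rho Hrho)) as [d Hd].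
    exists d. split; [apply cond_pos|]. intros s y Hs Hy Hsy.
    pose proof (Hd s y Hs Hy Hsy). unfold ext01 in H. rewrite !clamp_id in H by auto. exact H.
Qed.

Lemma qe_bern q m : 0 < q <= 1 -> INR m * (1 - INR m * (1 - q)) <= qe q m.
Proof.
  intro Hq.
  assert (Hp : forall i, 1 - INR i * (1 - q) <= q ^ i).
  { induction i. simpl. lra. rewrite S_INR. simpl pow.
    pose proof (pos_INR i).
    assert (q * (1 - INR i * (1 - q)) <= q * q ^ i) by (apply Rmult_le_compat_l; lra).
    assert (0 <= INR i * ((1 - q) * (1 - q))) by (apply Rmult_le_pos; nra). nra. }
  induction m. simpl. lra.
  simpl qe. rewrite S_INR. pose proof (Hp m). pose proof (pos_INR m). nra.
Qed.

Lemma qe_large (q : nat -> R) : (forall n, 0 < q n <= 1) -> is_lim_seq q (Finite 1) ->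
  forall L, exists n, (1 <= n)%nat /\ L <= qe (q n) n.
Proof.
  intros Hq Hl L. destruct (nat_large (2 * L)) as [m0 Hm0].
  set (m := S m0).
  assert (Hm : 2 * L <= INR m) by (unfold m; rewrite S_INR; lra).
  assert (HmP : 0 < INR m) by (unfold m; apply lt_0_INR; lia).
  apply is_lim_seq_Reals in Hl.
  destruct (Hl (/ (2 * INR m)) ltac:(apply Rinv_0_lt_compat; lra)) as [n0 Hn0].
  set (n := Nat.max n0 m).
  exists n. split; [unfold n, m; lia|].
  pose proof (Hn0 n ltac:(unfold n; lia)) as Hd. unfold Rdist in Hd.
  pose proof (Hq n) as Hqn.
  rewrite Rabs_left1 in Hd by lra.
  pose proof (qe_bern (q n) m Hqn) as Hb.
  pose proof (qe_mono (q n) m (n - m) (proj1 Hqn)) as Hmono.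
  replace (m + (n - m))%nat with n in Hmono by (unfold n; lia).
  assert (INR m * (1 - q n) <= / 2).
  { apply Rmult_le_reg_r with (2 * / INR m * / 2). 
    apply Rmult_lt_0_compat; [apply Rmult_lt_0_compat; [lra| apply Rinv_0_lt_compat; lra]|lra].
    replace (INR m * (1 - q n) * (2 * / INR m * / 2)) with (1 - q n) by (field; lra).
    replace (/ 2 * (2 * / INR m * / 2)) with (/ (2 * INR m)) by (field; lra). lra. }
  nra.
Qed.

Theorem theorem5p3 (N : nat) (xs : nat -> R) (q : nat -> R)
  (alpha : nat -> R -> R) (f : nat -> R -> R) :
  (2 <= N)%nat ->
  xs 1%nat = 0 -> xs N = 1 ->
  (forall i, (1 <= i < N)%nat -> xs i < xs (S i)) ->
  (forall n, 0 < q n <= 1) ->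
  is_lim_seq q (Finite 1) ->
  (forall i, (1 <= i <= N - 1)%nat ->
     exists c, c < 1 /\ forall t, inI t -> Rabs (alpha i t) <= c) ->
  (forall s, cont_on_I (f s)) ->
  (forall g, cont_on_I g -> forall eps, 0 < eps ->
     exists s, forall t, inI t -> Rabs (f s t - g t) < eps) ->
  forall g, cont_on_I g -> forall eps, 0 < eps ->
    exists n, (1 <= n)%nat /\
    exists (m : nat) (c : nat -> R) (idx : nat -> nat),
      forall t, inI t ->
        Rabs (g t - sum_n (fun j => c j * fractal N xs alpha (q n) n (f (idx j)) t) m)
        < eps.
Proof.
  intros HN H1 HNx Hinc Hq Hql Hal Hf Hdense g Hg eps Heps.
  assert (HP : part_ok N xs) by (repeat split; auto).
  destruct (alpha_unif alpha (N - 1) Hal) as [c [Hc Ha]].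
  destruct (Hdense g Hg (eps / 2) ltac:(lra)) as [s Hs].
  set (h := f s).
  destruct (cont_props h (Hf s)) as [[Bh HBh] Huc].
  assert (HBh0 : 0 <= Bh) by (pose proof (HBh 0 ltac:(unfold inI; lra)); pose proof (Rabs_pos (h 0)); lra).
  set (rho := eps * (1 - c) / 8).
  assert (Hrho : 0 < rho) by (unfold rho; apply Rdiv_lt_0_compat; [apply Rmult_lt_0_compat|]; lra).
  destruct (Huc rho Hrho) as [d [Hd Hud]].
  set (K := 2 * Bh / (d * d)).
  assert (HK : 0 <= K) by (unfold K; apply Rdiv_le_0_compat; [lra| apply Rmult_lt_0_compat; lra]).
  assert (Hmod : forall s y, inI s -> inI y -> Rabs (h s - h y) <= rho + K * (s - y) ^ 2).
  { intros s' y Hs' Hy. destruct (Rlt_dec (Rabs (s' - y)) d) as [Hlt|Hge].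
    - pose proof (Hud s' y Hs' Hy Hlt). assert (0 <= K * (s' - y) ^ 2) by (apply Rmult_le_pos; [lra| apply pow2_ge_0]). lra.
    - assert (Hsq : d * d <= (s' - y) ^ 2).
      { rewrite <- pow2_abs. simpl. rewrite Rmult_1_r.
        apply Rmult_le_compat; lra. }
      assert (K * (d * d) = 2 * Bh) by (unfold K; field; lra).
      assert (K * (d * d) <= K * (s' - y) ^ 2) by (apply Rmult_le_compat_l; auto).
      pose proof (HBh s' Hs'). pose proof (HBh y Hy).
      pose proof (Rabs_triang (h s') (- h y)) as Htr. rewrite Rabs_Ropp in Htr. unfold Rminus at 1. lra. }
  destruct (qe_large q Hq Hql (K / rho)) as [n [Hn Hen]].
  pose proof (qe_pos (q n) n (proj1 (Hq n)) Hn) as Hqe.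
  assert (HKe : K / qe (q n) n <= rho).
  { apply Rmult_le_reg_r with (qe (q n) n); auto. unfold Rdiv. rewrite Rmult_assoc, Rinv_l by lra.
    apply Rmult_le_compat_r with (r := rho) in Hen; [|lra].
    unfold Rdiv in Hen. rewrite Rmult_assoc, Rinv_l in Hen by lra. lra. }
  assert (Hmk : forall t, inI t -> Rabs (h t - MKZ n (q n) h t) <= 2 * rho).
  { intros t Ht. rewrite <- Rabs_Ropp. replace (- (h t - MKZ n (q n) h t)) with (MKZ n (q n) h t - h t) by ring.
    pose proof (MKZ_approx n (q n) h rho K t (Hq n) Hn ltac:(lra) HK Hmod Ht). lra. }
  destruct (fractal_exists N xs alpha h (MKZ n (q n) h) c Bh HP Hc Ha HBh
             (fun t Ht => MKZ_bound n (q n) h Bh t (Hq n) HBh Ht)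
             (MKZ_0 n (q n) h (Hq n) Hn) (MKZ_1 n (q n) h)) as [G HG].
  assert (HF : is_fractal N xs alpha (q n) n h (fractal N xs alpha (q n) n h)).
  { unfold fractal. apply epsilon_spec. exists G. exact HG. }
  pose proof (fractal_bound N xs alpha (q n) n h _ c Bh (2 * rho) HP Hc Ha HBh Hmk HF (eps / 8) ltac:(lra)) as Hb.
  exists n. split; auto. exists 0%nat, (fun _ => 1), (fun _ => s).
  intros t Ht. rewrite sum_O. rewrite Rmult_1_l. fold h.
  pose proof (Hb t Ht). pose proof (Hs t Ht). fold h in H0.
  assert (2 * rho * c / (1 - c) = eps * c / 4) by (unfold rho; field; lra).
  assert (eps * c / 4 <= eps / 4) by (unfold Rdiv; apply Rmult_le_compat_r; [lra| rewrite <- (Rmult_1_r eps) at 2; apply Rmult_le_compat_l; lra]).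
  pose proof (Rabs_triang (g t - h t) (h t - fractal N xs alpha (q n) n h t)) as Htr.
  replace (g t - h t + (h t - fractal N xs alpha (q n) n h t)) with (g t - fractal N xs alpha (q n) n h t) in Htr by ring.
  assert (E1 : Rabs (g t - h t) = Rabs (h t - g t)).
  { rewrite <- Rabs_Ropp. f_equal. ring. }
  assert (E2 : Rabs (h t - fractal N xs alpha (q n) n h t) = Rabs (fractal N xs alpha (q n) n h t - h t)).
  { rewrite <- Rabs_Ropp. f_equal. ring. }
  lra.
Qed.
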